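(* Let $T$ be a densely defined symmetric operator in a Hilbert space $\mathcal{H}$ with scalar product $(\cdot,\cdot)$, let $g_1,\dots,g_n\in\mathcal{H}$ and set $\mathcal{D}_0:=\{u\in\mathcal{D}(T):(u,g_j)=0,\ j=1,\dots,n\}$. If $x\in\mathcal{H}$ is such that the map $\mathcal{D}_0\to\mathbb{C}$, $u\mapsto(Tu,x)$, is bounded, then $x\in\mathcal{D}(T^* )$. *)

(* Defs.v *)
From HB Require Import structures.
From mathcomp Require Import all_boot all_order all_algebra.
From mathcomp Require Import reals.
From mathcomp Require Import complex.
Set Implicit Arguments. Unset Strict Implicit. Unset Printing Implicit Defensive.
Import Order.TTheory GRing.Theory Num.Theory.
Local Open Scope ring_scope.

Section Hilbert.
Variable R : realType.
Local Notation C := (R[i]).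
Variable V : lmodType C.

Record inner_product (ip : V -> V -> C) : Prop := InnerProduct {
  ip_linear_l : forall (a : C) (x y z : V), ip (a *: x + y) z = a * ip x z + ip y z;
  ip_conj_sym : forall x y : V, ip y x = Num.conj (ip x y);
  ip_ge0 : forall x : V, 0 <= ip x x;
  ip_eq0 : forall x : V, ip x x = 0 -> x = 0 }.

(* the induced norm ||x|| = sqrt((x,x)), a nonnegative real number inside C *)
Definition ip_norm (ip : V -> V -> C) (x : V) : C := sqrtC (ip x x).

Definition ip_cauchy (ip : V -> V -> C) (s : nat -> V) : Prop :=
  forall eps : C, 0 < eps -> exists N : nat, forall m n : nat,
    (N <= m)%N -> (N <= n)%N -> ip_norm ip (s m - s n) < eps.

Definition ip_converges (ip : V -> V -> C) (s : nat -> V) (l : V) : Prop :=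
  forall eps : C, 0 < eps -> exists N : nat, forall n : nat,
    (N <= n)%N -> ip_norm ip (s n - l) < eps.

Definition hilbert_space (ip : V -> V -> C) : Prop :=
  inner_product ip /\
  forall s : nat -> V, ip_cauchy ip s -> exists l : V, ip_converges ip s l.

(* An (unbounded) operator T with domain D: D is a linear subspace and
   T is linear on D (values of T outside D are irrelevant). *)
Definition lin_operator (D : V -> Prop) (T : V -> V) : Prop :=
  D 0 /\
  (forall (a : C) (u v : V), D u -> D v -> D (a *: u + v)) /\
  (forall (a : C) (u v : V), D u -> D v -> T (a *: u + v) = a *: T u + T v).

Definition densely_defined (ip : V -> V -> C) (D : V -> Prop) : Prop :=
  forall (x : V) (eps : C), 0 < eps -> exists u : V, D u /\ ip_norm ip (x - u) < eps.

Definition symmetric_op (ip : V -> V -> C) (D : V -> Prop) (T : V -> V) : Prop :=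
  forall u v : V, D u -> D v -> ip (T u) v = ip u (T v).

Definition adjoint_dom (ip : V -> V -> C) (D : V -> Prop) (T : V -> V) (x : V) : Prop :=
  exists y : V, forall u : V, D u -> ip (T u) x = ip u y.

End Hilbert.

(* Main.v *)
Require Import Defs.
From HB Require Import structures.
From mathcomp Require Import all_boot all_order all_algebra.
From mathcomp Require Import reals boolp classical_sets.
From mathcomp Require Import complex.
From mathcomp Require Import ring lra.
Import Order.TTheory GRing.Theory Num.Theory.
Local Open Scope ring_scope.
Local Open Scope complex_scope.
Set Implicit Arguments. Unset Strict Implicit. Unset Printing Implicit Defensive.

Section Basics.
Variable R : realType.
Local Notation C := (R[i]).
Variable V : lmodType C.
Variable ip : V -> V -> C.
Hypothesis ipH : inner_product ip.

Lemma ipDl x y z : ip (x + y) z = ip x z + ip y z.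
Proof. by rewrite -{1}[x]scale1r (ip_linear_l ipH) mul1r. Qed.
Lemma ip0l z : ip 0 z = 0.
Proof. have h := ipDl 0 0 z; rewrite addr0 in h. by apply: (addrI (ip 0 z)); rewrite -h addr0. Qed.
Lemma ipZl a x z : ip (a *: x) z = a * ip x z.
Proof. by rewrite -[a *: x]addr0 (ip_linear_l ipH) ip0l addr0. Qed.
Lemma ipNl x z : ip (- x) z = - ip x z.
Proof. by rewrite -scaleN1r ipZl mulN1r. Qed.
Lemma ipBl x y z : ip (x - y) z = ip x z - ip y z.
Proof. by rewrite ipDl ipNl. Qed.
Lemma conjE (z : C) : Num.conj z = conjc z. Proof. by []. Qed.
Lemma ipDr x y z : ip z (x + y) = ip z x + ip z y.
Proof. by rewrite (ip_conj_sym ipH) ipDl rmorphD (ip_conj_sym ipH x z) (ip_conj_sym ipH y z). Qed.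
Lemma ipZr a x z : ip z (a *: x) = conjc a * ip z x.
Proof. by rewrite (ip_conj_sym ipH) ipZl rmorphM (ip_conj_sym ipH x z). Qed.
Lemma ip0r z : ip z 0 = 0.
Proof. by rewrite (ip_conj_sym ipH) ip0l rmorph0. Qed.
Lemma ipNr x z : ip z (- x) = - ip z x.
Proof. by rewrite -scaleN1r ipZr rmorphN rmorph1 mulN1r. Qed.
Lemma ipBr x y z : ip z (x - y) = ip z x - ip z y.
Proof. by rewrite ipDr ipNr. Qed.

Definition N (u : V) : R := complex.Re (ip u u).
Definition m (z : C) : R := complex.Re z ^+ 2 + complex.Im z ^+ 2.

Lemma ReC (r : R) : complex.Re r%:C = r. Proof. by []. Qed.

Lemma ipNE u : ip u u = (N u)%:C.
Proof.
have := ger0_Im (ip_ge0 ipH u); rewrite /N; case: (ip u u) => a b /= ->.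
by [].
Qed.
Lemma N_ge0 u : 0 <= N u.
Proof. by rewrite -ler0c -ipNE (ip_ge0 ipH). Qed.
Lemma N_eq0 u : N u = 0 -> u = 0.
Proof. by move=> h; apply: (ip_eq0 ipH); rewrite ipNE h. Qed.
Lemma mE z : z * conjc z = (m z)%:C.
Proof.
case: z => a b; rewrite /m /=; apply/eqP; rewrite eq_complex /=; apply/andP; split; apply/eqP; ring.
Qed.
Lemma ipconj x y : ip y x = conjc (ip x y). Proof. exact: (ip_conj_sym ipH). Qed.
Lemma m_ge0 z : 0 <= m z. Proof. rewrite /m; nra. Qed.
Lemma mC r : m r%:C = r ^+ 2. Proof. rewrite /m /=; ring. Qed.
Lemma normE z : `|z| ^+ 2 = (m z)%:C. Proof. by rewrite -add_Re2_Im2. Qed.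

Lemma conjcM (x y : C) : conjc (x * y) = conjc x * conjc y.
Proof. exact: rmorphM. Qed.

Lemma CSid a b : N b != 0 ->
  N (a - (ip a b / ip b b) *: b) = N a - m (ip a b) / N b.
Proof.
move=> nb0; rewrite {1}/N.
suff -> : ip (a - (ip a b / ip b b) *: b) (a - (ip a b / ip b b) *: b) =
  (N a - m (ip a b) / N b)%:C by [].
rewrite !ipBl !ipBr !ipZl !ipZr (ipconj b a) !ipNE.
set s := ip b a; set n := N b.
rewrite conjcM conjcK conjc_inv conjc_real.
have -> : (N a - m (conjc s) / n)%:C = (N a)%:C - (conjc s * conjc (conjc s)) / n%:C.
  by rewrite mE rmorphB rmorphM fmorphV.
rewrite conjcK.
have nC : (N b)%:C != 0 by rewrite (inj_eq (@complexI R)).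
field. exact: nC.
Qed.
Lemma realCM (a b : R) : (a * b)%:C = a%:C * b%:C. Proof. exact: rmorphM. Qed.
Lemma realCD (a b : R) : (a + b)%:C = a%:C + b%:C. Proof. exact: rmorphD. Qed.
Lemma realCB (a b : R) : (a - b)%:C = a%:C - b%:C. Proof. exact: rmorphB. Qed.
Lemma realC2 : (2 : R)%:C = 2%:R. Proof. exact: rmorph_nat. Qed.
Lemma m0 : m 0 = 0. Proof. by rewrite /m /= expr0n /= addr0. Qed.
Lemma m1 : m 1 = 1. Proof. by rewrite /m /= expr0n /= addr0 expr1n. Qed.
Lemma mM x y : m (x * y) = m x * m y.
Proof.
apply: (@complexI R); rewrite realCM -!mE conjcM; ring.
Qed.
Lemma mN x : m (- x) = m x.
Proof. case: x => a b; rewrite /m /=; ring. Qed.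
Lemma mD x y : m (x + y) <= 2 * m x + 2 * m y.
Proof. case: x => a b; case: y => c d; rewrite /m /=. have := sqr_ge0 (a - c); have := sqr_ge0 (b - d). nra. Qed.
Lemma mD' x y : m (x - y) <= 2 * m x + 2 * m y.
Proof. by rewrite -(mN y) mD. Qed.
Lemma m_eq0 x : m x = 0 -> x = 0.
Proof.
case: x => a b; rewrite /m /= => h.
have ha : a = 0 by nra. have hb : b = 0 by nra.
by rewrite ha hb.
Qed.

Lemma NZ t a : N (t *: a) = m t * N a.
Proof.
apply: (@complexI R); rewrite realCM -!ipNE -mE ipZl ipZr; ring.
Qed.
Lemma NN a : N (- a) = N a.
Proof. by rewrite -scaleN1r NZ mN m1 mul1r. Qed.
Lemma para a b : N (a + b) + N (a - b) = 2 * N a + 2 * N b.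
Proof.
apply: (@complexI R); rewrite !realCD !realCM -!ipNE !ipDl !ipDr ?ipNl ?ipNr realC2. ring.
Qed.
Lemma ND a b : N (a + b) <= 2 * N a + 2 * N b.
Proof. have := para a b; have := N_ge0 (a - b); lra. Qed.

Lemma N0 : N 0 = 0. Proof. by rewrite /N ip0l. Qed.

Lemma CS a b : m (ip a b) <= N a * N b.
Proof.
have [nb0|nb0] := eqVneq (N b) 0.
  by rewrite (N_eq0 nb0) ip0r m0 mulr_ge0 // N_ge0.
have h := N_ge0 (a - (ip a b / ip b b) *: b); rewrite CSid // in h.
have nbp : 0 < N b by rewrite lt0r nb0 N_ge0.
by rewrite -ler_pdivrMr // -subr_ge0.
Qed.

Lemma quad a b (d : R) : (forall t, N a - d <= N (a + t *: b)) -> m (ip a b) <= d * N b.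
Proof.
move=> h.
have [nb0|nb0] := eqVneq (N b) 0.
  by rewrite (N_eq0 nb0) ip0r m0 N0 mulr0.
have := h (- (ip a b / ip b b)); rewrite scaleNr -/(a - _) CSid //.
have nbp : 0 < N b by rewrite lt0r nb0 N_ge0.
by rewrite -ler_pdivrMr // lerD2l lerN2.
Qed.
End Basics.

Section Op.
Variable R : realType.
Local Notation C := (R[i]).
Variable V : lmodType C.
Variable ip : V -> V -> C.
Hypothesis ipH : inner_product ip.
Variables (D : V -> Prop) (T : V -> V) (x : V).
Hypothesis linT : lin_operator D T.

Local Notation N := (N ip).
Local Notation m := (@m R).

Definition f u := ip (T u) x.

Lemma D0 : D 0. Proof. by case: linT. Qed.
Lemma DC a u w : D u -> D w -> D (a *: u + w). Proof. by case: linT => _ [h _]; apply: h. Qed.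
Lemma fL a u w : D u -> D w -> f (a *: u + w) = a * f u + f w.
Proof.
move=> Du Dw; rewrite /f; case: linT => _ [_ ->] //.
by rewrite (ip_linear_l ipH).
Qed.

Definition bound (P : V -> Prop) :=
  exists K : R, 0 <= K /\ forall u, P u -> m (f u) <= K * N u.

Lemma bound_sub (P Q : V -> Prop) : (forall u, Q u -> P u) -> bound P -> bound Q.
Proof. by move=> hQP [K [K0 hK]]; exists K; split=> // u /hQP; apply: hK. Qed.

Definition subsp (P : V -> Prop) :=
  P 0 /\ forall a u w, P u -> P w -> P (a *: u + w).

Lemma step (P : V -> Prop) (g : V) : subsp P -> (forall u, P u -> D u) ->
  bound (fun u => P u /\ ip u g = 0) -> bound P.
Proof.
move=> [P0 PC] PD [K [K0 hK]].
case: (pselect (exists w, P w /\ ip w g != 0)); last first.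
  move=> nw; exists K; split=> // u Pu; apply: hK; split=> //.
  by case: (eqVneq (ip u g) 0) => // hn; exfalso; apply: nw; exists u.
move=> [w [Pw wg]].
set w' := (ip w g)^-1 *: w.
have Pw' : P w' by rewrite /w' -[_ *: w]addr0; apply: PC.
have w'g : ip w' g = 1 by rewrite /w' ipZl // mulVf.
set Ng := N g; set Nw := N w'; set Mw := m (f w').
have Ng0 : 0 <= Ng := N_ge0 ipH g.
have Nw0 : 0 <= Nw := N_ge0 ipH w'.
have Mw0 : 0 <= Mw := m_ge0 _.
exists (4 * K * Ng * Nw + 4 * K + 2 * Ng * Mw); split.
  by rewrite !addr_ge0 // !mulr_ge0.
move=> u Pu.
set a := ip u g.
set u' := (- a) *: w' + u.
have Pu' : P u' by apply: PC.
have u'g : ip u' g = 0 by rewrite /u' (ip_linear_l ipH) w'g mulr1 -/a addNr.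
have h1 := hK u' (conj Pu' u'g).
have fu : f u = f u' + a * f w'.
  rewrite /u' (fL _ (PD _ Pw') (PD _ Pu)); ring.
have h2 : m (f u) <= 2 * m (f u') + 2 * (m a * Mw).
  by rewrite fu -mM mD.
have h3 : N u' <= 2 * (m a * Nw) + 2 * N u.
  by have := ND ipH ((-a) *: w') u; rewrite (NZ ipH) mN.
have h4 : m a <= N u * Ng := CS ipH u g.
have ma0 : 0 <= m a := m_ge0 _.
have Nu0 : 0 <= N u := N_ge0 ipH u.
have h5 : K * N u' <= K * (2 * (m a * Nw) + 2 * N u) by rewrite ler_wpM2l.
have h6 : K * (m a * Nw) <= K * (N u * Ng * Nw) by rewrite ler_wpM2l // ler_wpM2r.
have h7 : m a * Mw <= N u * Ng * Mw by rewrite ler_wpM2r.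
nra.
Qed.

Lemma bound_orth (gs : seq V) (P : V -> Prop) : subsp P -> (forall u, P u -> D u) ->
  bound (fun u => P u /\ forall g, g \in gs -> ip u g = 0) -> bound P.
Proof.
elim: gs P => [|g gs IH] P sP PD hb.
  by apply: bound_sub hb => u Pu; split=> // g; rewrite in_nil.
apply: (step (g:=g) sP PD).
case: sP => P0 PC.
apply: IH.
- split; first by split=> //; rewrite (ip0l ipH).
  move=> a u w [Pu ug] [Pw wg]; split; first exact: PC.
  by rewrite (ip_linear_l ipH) ug wg mulr0 addr0.
- by move=> u [/PD].
apply: bound_sub hb => u [[Pu ug] hg]; split=> // h.
by rewrite in_cons => /orP [/eqP ->|/hg].
Qed.
End Op.

Lemma smallinv (R : realType) (e : R) : 0 < e ->
  exists K : nat, forall k, (K <= k)%N -> (k.+1%:R : R)^-1 < e.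
Proof.
move=> e0; exists (Num.Def.archi_bound e^-1) => k hk.
have kp : (0 : R) < k.+1%:R by rewrite ltr0n.
rewrite invf_plt ?posrE //.
have ei : 0 <= e^-1 by rewrite invr_ge0 ltW.
apply: (lt_le_trans (archi_boundP ei)).
by rewrite ler_nat; apply: leq_trans hk _.
Qed.

Lemma le0_lim (R : realType) (z c : R) : 0 <= c ->
  (forall e, 0 < e -> z <= c * e) -> z <= 0.
Proof.
move=> c0 h; rewrite leNgt; apply/negP => z0.
have c1 : 0 < c + 1 by lra.
have := h (z / (c + 1)) (divr_gt0 z0 c1).
rewrite mulrA ler_pdivlMr //.
nra.
Qed.

Section Riesz.
Variable R : realType.
Local Notation C := (R[i]).
Variable V : lmodType C.
Variable ip : V -> V -> C.
Hypothesis ipH : inner_product ip.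
Variables (D : V -> Prop) (T : V -> V) (x : V).
Hypothesis linT : lin_operator D T.

Local Notation N := (N ip).
Local Notation m := (@m R).
Local Notation f := (f ip T x).

Definition rcomplete := forall s : nat -> V,
  (forall e : R, 0 < e -> exists K, forall j k, (K <= j)%N -> (K <= k)%N -> N (s j - s k) < e) ->
  exists l, forall e : R, 0 < e -> exists K, forall k, (K <= k)%N -> N (s k - l) < e.

Lemma DZ a u : D u -> D (a *: u).
Proof. by move=> Du; rewrite -[_ *: u]addr0; apply: (DC linT) => //; apply: D0 linT. Qed.
Lemma DD u w : D u -> D w -> D (u + w).
Proof. by move=> Du Dw; rewrite -[u]scale1r; apply: (DC linT). Qed.
Lemma f0 : f 0 = 0.
Proof.
have D0' := D0 linT.
have h := fL ipH x linT 1 D0' D0'; rewrite scale1r addr0 mul1r in h.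
by apply: (addrI (f 0)); rewrite -h addr0.
Qed.
Lemma fZ a u : D u -> f (a *: u) = a * f u.
Proof. by move=> Du; rewrite -[_ *: u]addr0 (fL ipH x linT) ?f0 ?addr0 //; apply: D0 linT. Qed.
Lemma fD u w : D u -> D w -> f (u + w) = f u + f w.
Proof. by move=> Du Dw; rewrite -{1}[u]scale1r (fL ipH x linT) // mul1r. Qed.

Lemma riesz : rcomplete -> bound ip T x D -> exists y, forall u, D u -> f u = ip u y.
Proof.
move=> comp [K [K0 hK]].
case: (pselect (exists u0, D u0 /\ f u0 != 0)) => [[u0 [Du0 fu0]]|nf]; last first.
  exists 0 => u Du; rewrite (ip0r ipH).
  by case: (eqVneq (f u) 0) => // h; exfalso; apply: nf; exists u.
pose S v := D v /\ f v = 1.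
have S0 : S ((f u0)^-1 *: u0) by split; [apply: DZ | rewrite fZ // mulVf].
pose E := (fun r : R => exists v, S v /\ r = N v) : set R.
have En : nonempty E by exists (N ((f u0)^-1 *: u0)); exists ((f u0)^-1 *: u0).
have Elb : has_lbound E by exists 0 => r [v [_ ->]]; apply: N_ge0.
set d := inf E.
have dle : forall v, S v -> d <= N v by move=> v Sv; apply: (ge_inf Elb); exists v.
have [e [e0 esm]] : exists e : nat -> R, (forall k, 0 < e k) /\
   (forall eps, 0 < eps -> exists K, forall k, (K <= k)%N -> e k < eps).
  exists (fun k : nat => (k.+1%:R : R)^-1); split; last exact: smallinv.
  by move=> k; rewrite invr_gt0 ltr0n.
have hv : forall k : nat, exists v, S v /\ N v < d + e k.
  move=> k; have dl : d < d + e k by rewrite ltrDl.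
  have [r [v [Sv ->]] rlt] := inf_lt En dl.
  by exists v.
have [vs hvs] := choice hv.
have Svs k : S (vs k) by case: (hvs k).
have Nvs k : N (vs k) < d + e k by case: (hvs k).
have cau : forall j k, N (vs j - vs k) <= 2 * e j + 2 * e k.
  move=> j k.
  pose h : C := (2^-1 : R)%:C.
  have Smid : S (h *: (vs j + vs k)).
    case: (Svs j) => Dj fj; case: (Svs k) => Dk fk.
    split; first by apply: DZ; apply: DD.
    rewrite fZ; last by apply: DD.
    rewrite fD // fj fk.
    have -> : (1 + 1 : C) = (2 : R)%:C by rewrite realC2 mulr2n.
    by rewrite /h -realCM mulVf ?pnatr_eq0.
  have := dle _ Smid; rewrite (NZ ipH) mC.
  have := para ipH (vs j) (vs k).
  have := Nvs j; have := Nvs k.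
  move: (N (vs j + vs k)) => X; move=> h1 h2 h3 h4.
  have h5 : 4 * d <= X.
    have -> : X = 4 * ((2^-1) ^+ 2 * X) by field.
    by rewrite ler_pM2l.
  lra.
have [v hv_lim] : exists v, forall e', 0 < e' -> exists K', forall k, (K' <= k)%N -> N (vs k - v) < e'.
  apply: comp => eps eps0.
  have [K1 hK1] := esm _ (divr_gt0 eps0 (ltr0n R 4 : (0 : R) < 4%:R)).
  exists K1 => j k hj hk.
  have := cau j k; have := hK1 j hj; have := hK1 k hk. lra.
have conv : forall e', 0 < e' -> exists k, N (vs k - v) < e' /\ e k < e'.
  move=> e' e'0; have [K1 hK1] := hv_lim e' e'0; have [K2 hK2] := esm _ e'0.
  exists (maxn K1 K2); split; [apply: hK1 | apply: hK2]; by rewrite ?leq_maxl ?leq_maxr.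
have orth : forall u, D u -> f u = 0 -> ip u v = 0.
  move=> u Du fu.
  suff : m (ip v u) <= 0.
    move=> hm; have : m (ip v u) = 0 by apply/le_anti; rewrite hm m_ge0.
    by move/m_eq0 => h; rewrite (ipconj ipH) h conjc0.
  apply: (@le0_lim _ _ (4 * N u)); first by rewrite mulr_ge0 // N_ge0.
  move=> e' e'0; have [k [hk1 hk2]] := conv e' e'0.
  have hq : m (ip (vs k) u) <= e k * N u.
    apply: (quad ipH) => t.
    have Skt : S (vs k + t *: u).
      case: (Svs k) => Dk fk; split; first by apply: DD => //; apply: DZ.
      by rewrite fD ?fZ ?fk ?fu ?mulr0 ?addr0 //; apply: DZ.
    have := dle _ Skt; have := Nvs k; lra.
  have hcs := CS ipH (vs k - v) u.
  have hd : ip v u = ip (vs k) u - ip (vs k - v) u by rewrite (ipBl ipH); ring.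
  have hmd := mD' (ip (vs k) u) (ip (vs k - v) u).
  rewrite -hd in hmd.
  have Nu0 := N_ge0 ipH u.
  have Nk0 := N_ge0 ipH (vs k - v).
  have a1 : e k * N u <= e' * N u by rewrite ler_wpM2r // ltW.
  have a2 : N (vs k - v) * N u <= e' * N u by rewrite ler_wpM2r // ltW.
  lra.
have rep : forall u, D u -> ip u v = f u * ip (vs 0%N) v.
  move=> u Du.
  case: (Svs 0%N) => D0 f0'.
  have Du' : D ((- f u) *: vs 0%N + u) by apply: (DC linT).
  have := orth _ Du'; rewrite (fL ipH x linT) // f0' (ip_linear_l ipH).
  move=> h; have {h} h := h (etrans (f_equal (fun z => z + f u) (mulr1 _)) (addNr _)).
  by apply/eqP; rewrite -subr_eq0 -h; apply/eqP; ring.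
set c0 := ip (vs 0%N) v.
have c0n : c0 != 0.
  apply/negP => /eqP c00.
  have vk : forall k, ip (vs k) v = 0.
    move=> k; case: (Svs k) => Dk fk; rewrite rep // fk mul1r; exact: c00.
  have Nv0 : N v = 0.
    have Nv_ge0 := N_ge0 ipH v.
    suff : N v ^+ 2 <= 0 by nra.
    apply: (le0_lim Nv_ge0) => e' e'0.
    have [k [hk1 _]] := conv e' e'0.
    have hcs := CS ipH (vs k - v) v.
    have : ip (vs k - v) v = - (N v)%:C by rewrite (ipBl ipH) vk (ipNE ipH) sub0r.
    move=> h; rewrite h mN mC in hcs.
    have := N_ge0 ipH (vs k - v).
    nra.
  have v0 : v = 0 := N_eq0 ipH Nv0.
  have K1 : 0 < K + 1 by lra.
  have K1' : 0 < (K + 1)^-1 by rewrite invr_gt0.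
  have [k [hk1 _]] := conv _ K1'.
  rewrite v0 subr0 in hk1.
  case: (Svs k) => Dk fk.
  have := hK _ Dk; rewrite fk m1.
  rewrite -(ltr_pM2r K1) mulVf ?gt_eqF // in hk1.
  have := N_ge0 ipH (vs k).
  nra.
exists ((conjc c0)^-1 *: v) => u Du.
rewrite (ipZr ipH) conjc_inv conjcK rep // -/c0.
by field.
Qed.
End Riesz.

Lemma ReCE (R : realType) (c : R[i]) : 0 <= c -> c = (complex.Re c)%:C.
Proof. by move/ger0_Im; case: c => a b /= ->. Qed.

Lemma sq_lt (R : realType) (a b : R[i]) : 0 <= a -> 0 <= b -> (a ^+ 2 < b ^+ 2) = (a < b).
Proof. by move=> a0 b0; rewrite ltr_pXn2r ?nnegrE. Qed.
Lemma sq_le (R : realType) (a b : R[i]) : 0 <= a -> 0 <= b -> (a ^+ 2 <= b ^+ 2) = (a <= b).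
Proof. by move=> a0 b0; rewrite ler_pXn2r ?nnegrE. Qed.



Theorem lemma9p1 (R : realType) (V : lmodType R[i]) (ip : V -> V -> R[i])
  (D : V -> Prop) (T : V -> V) (n : nat) (g : 'I_n -> V) (x : V) :
  hilbert_space ip ->
  lin_operator D T ->
  densely_defined ip D ->
  symmetric_op ip D T ->
  (exists c : R[i], 0 <= c /\
     forall u : V, D u -> (forall j : 'I_n, ip u (g j) = 0) ->
       `|ip (T u) x| <= c * ip_norm ip u) ->
  adjoint_dom ip D T x.
Proof.
move=> [ipH compC] linT _ _ [c [c0 hc]].
have comp : rcomplete ip.
  move=> s hs.
  have hcau : ip_cauchy ip s.
    move=> eps eps0.
    have eE := ReCE (ltW eps0).
    have r0 : 0 < complex.Re eps by rewrite -ltcR -eE.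
    have [K hK] := hs _ (exprn_gt0 2 r0).
    exists K => j k hj hk.
    have := hK j k hj hk.
    rewrite /ip_norm -sq_lt ?sqrtC_ge0 ?(ip_ge0 ipH) ?ltW // sqrtCK (ipNE ipH).
    by rewrite eE -ltcR !expr2 realCM.
  have [l hl] := compC s hcau.
  exists l => e e0.
  have eps0 : 0 < (Num.sqrt e)%:C by rewrite ltcR sqrtr_gt0.
  have [K hK] := hl _ eps0.
  exists K => k hk; have := hK k hk.
  rewrite /ip_norm -sq_lt ?sqrtC_ge0 ?(ip_ge0 ipH) ?ltW // sqrtCK (ipNE ipH).
  by rewrite expr2 -realCM -expr2 sqr_sqrtr ?ltW // ltcR.
have hb : bound ip T x D.
  apply: (bound_orth ipH (x:=x) linT (gs := [seq g j | j <- enum 'I_n])).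
  - by split; [exact: D0 linT | exact: DC linT].
  - by [].
  exists ((complex.Re c) ^+ 2); split; first exact: sqr_ge0.
  move=> u [Du hu].
  have hj : forall j, ip u (g j) = 0 by move=> j; apply: hu; apply: map_f; rewrite mem_enum.
  have h := hc u Du hj.
  have : `|f ip T x u| ^+ 2 <= (c * ip_norm ip u) ^+ 2.
    by rewrite sq_le // mulr_ge0 // /ip_norm sqrtC_ge0 (ip_ge0 ipH).
  rewrite normE exprMn /ip_norm sqrtCK (ipNE ipH) (ReCE c0) !expr2 -!realCM lecR.
  by rewrite -expr2.
have [y hy] := riesz ipH (x:=x) linT comp hb.
by exists y => u Du; exact: hy u Du.
Qed.
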